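(* For every integer $k\ge 0$, $M_{2k+1} < (1.45)^{k+1}$.
   Context: Fix integers $p,q\ge1$. A labeled binary tree is a rooted, ordered, full binary tree (every internal node has exactly two children) whose internal nodes are labeled ''+'' or ''*'' and whose leaves are labeled by pairs $(i,j)\in\{1,\dots,q\}\times\{1,\dots,p\}$. $\mathcal{F}_{2k+1}$ is the set of such trees with at most $2k+1$ nodes. For a tree $f$, the integer $M_f$ is defined recursively: - $M_f=1$ if $f$ is a single leaf; - $M_f=M_{f_L}+M_{f_R}$ if the root of $f$ is ''+'', where $f_L,f_R$ are its left and right subtrees; - $M_f=M_{f_L}\cdot M_{f_R}$ if the root of $f$ is ''*''. Equivalently, $M_f$ is the length of the expansion vectors $\bm{v},\bm{u}$ with $h(\bm{x};f,\bm{w})=\langle\bm{v},\bm{u}\rangle$, obtained by concatenation at ''+'' nodes and by all pairwise products at ''*'' nodes. Finally, $M_{2k+1}=\max_{f\in\mathcal{F}_{2k+1}} M_f$. *)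

(* Defs.v *)
From mathcomp Require Import all_boot all_order all_algebra.
Set Implicit Arguments. Unset Strict Implicit. Unset Printing Implicit Defensive.

Inductive op := OPlus | OTimes.

(* Rooted, ordered, full binary trees; internal nodes labeled by op,
   leaves labeled by pairs (i,j) in {1..q} x {1..p} (here 0-indexed as 'I_q * 'I_p). *)
Inductive ltree (q p : nat) :=
| Leaf of 'I_q * 'I_p
| Node of op & ltree q p & ltree q p.

Fixpoint nnodes (q p : nat) (f : ltree q p) : nat :=
  match f with
  | Leaf _ => 1
  | Node _ l r => (nnodes l + nnodes r).+1
  end.

Fixpoint Mf (q p : nat) (f : ltree q p) : nat :=
  match f with
  | Leaf _ => 1
  | Node OPlus l r => Mf l + Mf r
  | Node OTimes l r => Mf l * Mf r
  end.

(* Main.v *)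
Require Import Defs.
From mathcomp Require Import all_boot all_order all_algebra.
From mathcomp Require Import zify lra.
Import Order.TTheory GRing.Theory Num.Theory.

Fixpoint T (n : nat) : nat :=
  match n with
  | 0 => 0 | 1 => 1 | 2 => 2 | 3 => 3 | 4 => 4
  | S (S (S ((S (S _)) as m))) => 3 * T m
  end.

Lemma TS m : (2 <= m)%N -> T (m + 3) = 3 * T m.
Proof. case: m => [|[|m]] //= _. by rewrite !addnS addn0. Qed.

Lemma Tsup n : forall a b, (a + b <= n)%N -> (1 <= a)%N -> (1 <= b)%N ->
  (T a + T b <= T (a + b))%N /\ (T a * T b <= T (a + b))%N.
Proof.
elim: n => [|n IH] a b hab ha hb; first lia.
case: (leqP 5 a) => Ha.
  have [a' Ea] : exists a', a = a' + 3 by exists (a - 3); lia.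
  subst a.
  have h1 : (a' + b <= n)%N by lia.
  have h2 : (1 <= a')%N by lia.
  have [IH1 IH2] := IH a' b h1 h2 hb.
  rewrite TS; last lia.
  have -> : a' + 3 + b = (a' + b) + 3 by lia.
  rewrite TS; last lia. split; nia.
case: (leqP 5 b) => Hb.
  have [b' Eb] : exists b', b = b' + 3 by exists (b - 3); lia.
  subst b.
  have h1 : (a + b' <= n)%N by lia.
  have h2 : (1 <= b')%N by lia.
  have [IH1 IH2] := IH a b' h1 ha h2.
  rewrite TS; last lia.
  have -> : a + (b' + 3) = (a + b') + 3 by lia.
  rewrite TS; last lia. split; nia.
case: a ha Ha {hab} => [|[|[|[|[|a]]]]] // _ _;
case: b hb Hb => [|[|[|[|[|b]]]]] // _ _.
Qed.

Fixpoint lv q p (f : ltree q p) : nat :=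
  match f with Leaf _ => 1 | Node _ l r => lv q p l + lv q p r end.
Arguments lv {q p} f.

Lemma lv_ge1 q p (f : ltree q p) : (1 <= lv f)%N.
Proof. elim: f => //= _ l IHl r IHr; lia. Qed.

Lemma nn_lv q p (f : ltree q p) : nnodes f + 1 = 2 * lv f.
Proof. elim: f => //= _ l IHl r IHr; lia. Qed.

Lemma Mf_T q p (f : ltree q p) : (Mf f <= T (lv f))%N.
Proof.
elim: f => //= o l IHl r IHr.
have [h1 h2] := Tsup (lv l + lv r) (lv l) (lv r) (leqnn _) (lv_ge1 _ _ l) (lv_ge1 _ _ r).
case: o; nia.
Qed.

Lemma T_lt n : (1 <= n)%N -> ((T n)%:R < (145%:R / 100%:R : rat) ^+ n)%R.
Proof.
elim/ltn_ind: n => n IH hn.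
case: (leqP 5 n) => Hn.
  have [m Em] : exists m, n = m + 3 by exists (n - 3); lia.
  subst n.
  rewrite TS; last lia.
  rewrite exprD natrM.
  have h1 : (m < m + 3)%N by lia.
  have h2 : (1 <= m)%N by lia.
  have h := IH m h1 h2.
  have h3 : (3%:R < (145%:R / 100%:R : rat) ^+ 3)%R.
    rewrite !exprS expr0. lra.
  move: h h3.
  set x := ((145%:R / 100%:R : rat) ^+ m)%R.
  set y := ((145%:R / 100%:R : rat) ^+ 3)%R.
  set t := ((T m)%:R : rat)%R.
  have ht : (0 <= t)%R by rewrite /t ler0n.
  have hc : (0 <= (145%:R / 100%:R : rat))%R by lra.
  have hx : (0 <= x)%R by apply: exprn_ge0.
  move=> h h3.
  apply: (lt_le_trans (y := (3%:R * x)%R)).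
    by rewrite ltr_pM2l.
  by rewrite mulrC ler_wpM2l // ltW.
case: n hn Hn {IH} => [|[|[|[|[|n]]]]] hn Hn; try (exfalso; lia); rewrite [T _]/= !exprS expr0; lra.
Qed.

Theorem lemma3 (p q : nat) (hp : (1 <= p)%N) (hq : (1 <= q)%N) (k : nat) :
  forall f : ltree q p, (nnodes f <= 2 * k + 1)%N ->
    ((Mf f)%:R < (145%:R / 100%:R : rat) ^+ k.+1)%R.
Proof.
move=> f hf.
have hl : (lv f <= k.+1)%N by have := nn_lv _ _ f; lia.
have h1 := lv_ge1 _ _ f.
apply: (le_lt_trans (y := ((T (lv f))%:R : rat))).
  by rewrite ler_nat Mf_T.
apply: (lt_le_trans (T_lt _ h1)).
have hc : (1 < (145%:R / 100%:R : rat))%R by lra.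
by rewrite ler_eXn2l.
Qed.
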